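(* Assume $\nu$ satisfies Assumption (A), $\mathcal M$ satisfies Assumption (B), let $0<\gamma<1$, $\delta_1\in(0,1)$, and assume $M_1\ge-\ln(\delta_1/C)\frac{1}{c\,\phi(\kappa_0)}$ with $\kappa_0=\frac{(1-\gamma^2)\widehat\sigma_0(\mathcal M)^2}{8K_\infty K_{\mathcal L}}$, where $\widehat\sigma_0(\mathcal M)^2=\max_{\mu\in\mathcal P}\mathrm{Var}[g_\mu(Z)]$. Then $$\mathbb{P}\Big[\mathrm{Var}\big[g_{\overline\mu_1}(Z)\mid\overline Z^{1:\infty}\big]\ge\gamma^2\max_{\mu\in\mathcal P}\mathrm{Var}\big[g_\mu(Z)\mid\overline Z^{1:\infty}\big]\Big]\ge1-\delta_1,$$ i.e. $\mathbb{P}[\overline\sigma_0(\mathcal M)\ge\gamma\widehat\sigma_0(\mathcal M)]\ge1-\delta_1$, where $\overline\sigma_0(\mathcal M)=\sqrt{\mathrm{Var}[g_{\overline\mu_1}(Z)\mid\overline Z^{1:\infty}]}$.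
   Context: $Z$ is an $\mathbb{R}^d$-valued random vector with law $\nu$; $L^2_{\nu,0}(\mathbb{R}^d)=\{g\in L^2_\nu:\int g\,d\nu=0\}$, $\|g\|=\sqrt{\mathrm{Var}[g(Z)]}$. $\mathcal P\subset\mathbb{R}^p$; $f_\mu$ continuous, in $L^2_\nu$; $g_\mu=f_\mu-\mathbb{E}[f_\mu(Z)]$; $\mathcal M=\{g_\mu:\mu\in\mathcal P\}$; $d_n(\mathcal M)=\inf_{V_n}\sup_\mu\inf_{h\in V_n}\|g_\mu-h\|$ over $n$-dimensional subspaces $V_n$. $\mathcal L$: Lipschitz functions, $\|f\|_{\mathcal L}$ Lipschitz constant. For $\overline Z=(Z_k)_{k\le M}$: $\mathbb{E}_{\overline Z}(f)=\frac1M\sum_kf(Z_k)$, $\mathrm{Var}_{\overline Z}(f)=\mathbb{E}_{\overline Z}(f^2)-\mathbb{E}_{\overline Z}(f)^2$. $\overline Z^n=(Z^n_k)_{1\le k\le M_n}$, all $Z^n_k$ i.i.d. with law $\nu$ independent of $Z$, $\overline Z^{1:\infty}=(\overline Z^n)_n$. $\overline\mu_1\in\operatorname{argmax}_{\mu\in\mathcal P}\mathrm{Var}_{\overline Z^1}(g_\mu)$ with $g_{\overline\mu_1}\ne0$ (first step of the MC-greedy algorithm). Assumption (A): $\exists\alpha>1,\beta>0$ with $\int_{\mathbb{R}^d}e^{\beta|x|^\alpha}d\nu(x)<\infty$. $\phi(\kappa)=\kappa^2\mathbf 1_{\kappa\le1}+\kappa^\alpha\mathbf 1_{\kappa>1}$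 ($d=1$), $(\kappa/\log(2+1/\kappa))^2\mathbf 1_{\kappa\le1}+\kappa^\alpha\mathbf 1_{\kappa>1}$ ($d=2$), $\kappa^d\mathbf 1_{\kappa\le1}+\kappa^\alpha\mathbf 1_{\kappa>1}$ ($d\ge3$). $c,C>0$ are constants (depending on $\nu,d,\alpha,\beta$; they exist under (A) by Fournier–Guillin) such that for all $M$, all i.i.d. $\overline Z=(Z_k)_{k\le M}$ of law $\nu$, all $\kappa>0$: $\mathbb{P}[\sup_{\|f\|_{\mathcal L}\le1}|\mathbb{E}[f(Z)]-\mathbb{E}_{\overline Z}(f)|\ge\kappa]\le Ce^{-cM\phi(\kappa)}$. Assumption (B): (B1) $\mathcal M$ compact in $L^2_{\nu,0}$, $K_2=\sup_\mu\|g_\mu\|<\infty$; (B2) $\mathcal M\subset\mathcal L$, $K_{\mathcal L}=\sup_\mu\|g_\mu\|_{\mathcal L}<\infty$; (B3) $\mathcal M\subset L^\infty$, $K_\infty=\sup_\mu\|g_\mu\|_{L^\infty}<\infty$; (B4) $d_n(\mathcal M)>0$ for all $n$. *)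

(* Defs.v *)
(* R^d is modelled as [d.-tuple R] with its product
   (coordinate) sigma-algebra, which is the Borel sigma-algebra of R^d, and the
   Euclidean norm/distance defined below. *)
From HB Require Import structures.
From mathcomp Require Import all_boot all_order all_algebra.
From mathcomp Require Import all_classical all_reals all_analysis.
From mathcomp Require Import ess_sup_inf.
Set Implicit Arguments.
Unset Strict Implicit.
Unset Printing Implicit Defensive.
Import Order.TTheory GRing.Theory Num.Theory.
Import numFieldNormedType.Exports.
Local Open Scope classical_set_scope.
Local Open Scope ring_scope.

Section Defs.
Variable R : realType.

Definition enorm (d : nat) (x : d.-tuple R) : R :=
  Num.sqrt (\sum_(i < d) (tnth x i) ^+ 2).
Definition edist (d : nat) (x y : d.-tuple R) : R :=
  Num.sqrt (\sum_(i < d) (tnth x i - tnth y i) ^+ 2).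

Definition lipschitz_with (d : nat) (L : R) (f : d.-tuple R -> R) :=
  forall x y, `|f x - f y| <= L * edist x y.
Definition lipconst (d : nat) (f : d.-tuple R -> R) : R :=
  inf [set L | 0 <= L /\ lipschitz_with L f].
Definition econtinuous (d : nat) (f : d.-tuple R -> R) :=
  forall x (e : R), 0 < e ->
    exists2 del : R, 0 < del & forall y, edist x y < del -> `|f x - f y| < e.

Definition phiFG (d : nat) (alpha kappa : R) : R :=
  if kappa <= 1 then
    (if d == 1%N then kappa ^+ 2
     else if d == 2%N then (kappa / ln (2 + kappa^-1)) ^+ 2
     else kappa ^+ d)
  else powR kappa alpha.

Section Nu.
Variable d : nat.
Variable nu : probability (d.-tuple R) R.

Definition Enu (f : d.-tuple R -> R) : R := fine (\int[nu]_x (f x)%:E).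
Definition Varnu (f : d.-tuple R -> R) : R :=
  Enu (fun x => f x ^+ 2) - (Enu f) ^+ 2.
Definition l2norm (f : d.-tuple R -> R) : R := Num.sqrt (Varnu f).
Definition linf (f : d.-tuple R -> R) : \bar R :=
  ess_sup nu (fun x => (`|f x|)%:E).

Definition in_L2 (f : d.-tuple R -> R) :=
  measurable_fun setT f /\ nu.-integrable setT (fun x => (f x ^+ 2)%:E).
Definition in_L20 (f : d.-tuple R -> R) := in_L2 f /\ Enu f = 0.

Definition L2_lin_indep (n : nat) (h : 'I_n -> d.-tuple R -> R) :=
  forall a : 'I_n -> R,
    {ae nu, forall x, \sum_(i < n) a i * h i x = 0} -> forall i, a i = 0.

Definition centred (P : Type) (f : P -> d.-tuple R -> R) (mu : P) :=
  fun x => f mu x - Enu (f mu).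

Definition kolmogorov_width (P : Type) (Pset : set P)
    (g : P -> d.-tuple R -> R) (n : nat) : R :=
  inf [set w | exists h : 'I_n -> d.-tuple R -> R,
        [/\ forall i, in_L20 (h i), L2_lin_indep h &
            w = sup [set inf [set l2norm (fun x => g mu x - \sum_(i < n) a i * h i x)
                             | a in [set: 'I_n -> R]]
                    | mu in Pset]]].

(* compactness of M = {g mu | mu in Pset} in the metric space L^2_{nu,0},
   written as sequential compactness (equivalent in metric spaces) *)
Definition L2_compact (P : Type) (Pset : set P) (g : P -> d.-tuple R -> R) :=
  forall u : nat -> P, (forall n, Pset (u n)) ->
    exists (s : nat -> nat) (mu : P),
      [/\ {homo s : m n / (m < n)%N >-> (m < n)%N}, Pset mu &
          (fun n => l2norm (fun x => g (u (s n)) x - g mu x)) @ \oo --> (0 : R)].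
End Nu.

Definition Eemp (d M : nat) (xs : nat -> d.-tuple R) (f : d.-tuple R -> R) : R :=
  M%:R^-1 * \sum_(k < M) f (xs k).
Definition Varemp (d M : nat) (xs : nat -> d.-tuple R) (f : d.-tuple R -> R) : R :=
  Eemp M xs (fun x => f x ^+ 2) - (Eemp M xs f) ^+ 2.

Definition iid_law (dO : measure_display) (Omega : measurableType dO)
    (Pr : probability Omega R) (d : nat) (nu : probability (d.-tuple R) R)
    (X : nat -> Omega -> d.-tuple R) :=
  [/\ forall k, measurable_fun setT (X k),
      forall k (A : set (d.-tuple R)), measurable A -> Pr (X k @^-1` A) = nu A &
      forall (n : nat) (A : nat -> set (d.-tuple R)),
        (forall k, measurable (A k)) ->
        Pr (\bigcap_(k in [set k | (k < n)%N]) (X k @^-1` A k)) =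
        (\prod_(k < n) Pr (X k @^-1` A k))%E].

End Defs.

(* Main.v *)
Require Import Defs.
From HB Require Import structures.
From mathcomp Require Import all_boot all_order all_algebra.
From mathcomp Require Import all_classical all_reals all_analysis.
From mathcomp Require Import ess_sup_inf.
From mathcomp Require Import ring lra.
Import Order.TTheory GRing.Theory Num.Theory.
Import numFieldNormedType.Exports.
Local Open Scope classical_set_scope.
Local Open Scope ring_scope.
Set Implicit Arguments.
Unset Strict Implicit.

Section Helpers.
Variable R : realType.

Lemma edist_ge0 d (x y : d.-tuple R) : 0 <= Defs.edist x y.
Proof. exact: sqrtr_ge0. Qed.
Arguments edist_ge0 {d}.

Lemma edist_le d (x y : d.-tuple R) (t : R) : 0 <= t ->
  (forall i, `|tnth x i - tnth y i| <= t) -> Defs.edist x y <= t * d%:R.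
Proof.
move=> t0 H; rewrite /Defs.edist.
have -> : t * d%:R = Num.sqrt ((t * d%:R) ^+ 2) by rewrite sqrtr_sqr ger0_norm // mulr_ge0.
apply: ler_wsqrtr.
apply: (@le_trans _ _ (\sum_(i < d) t ^+ 2)).
  apply: ler_sum => i _; have := H i; rewrite -[_ ^+ 2]real_normK ?num_real //.
  move=> h; rewrite lerXn2r ?nnegrE //.
rewrite sumr_const card_ord -mulr_natr.
have hd : (d%:R : R) <= d%:R ^+ 2.
  case: (d) => [|n]; first by rewrite expr0n.
  by rewrite expr2 ler_peMl // ler1n.
have ht : 0 <= t ^+ 2 by exact: sqr_ge0.
rewrite exprMn; nra.
Qed.

Definition clamp (K t : R) : R := Num.max (- K) (Num.min K t).

Lemma clamp_bound K t : 0 <= K -> `|clamp K t| <= K.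
Proof.
move=> K0; rewrite /clamp ler_norml; apply/andP; split.
  by rewrite le_max lexx.
rewrite ge_max; apply/andP; split; first lra.
by rewrite ge_min lexx.
Qed.

Lemma clamp_id K t : `|t| <= K -> clamp K t = t.
Proof.
move=> /[dup] h; rewrite ler_norml => /andP[h1 h2].
rewrite /clamp (_ : Num.min K t = t); last by apply/min_idPr.
by apply/max_idPr.
Qed.

Lemma clamp_lip K s t : 0 <= K -> `|clamp K s - clamp K t| <= `|s - t|.
Proof.
move=> K0; rewrite /clamp /Num.max /Num.min.
have n1 := ler_norm (s - t); have n2 := ler_norm (- (s - t)); rewrite normrN in n2.
have [h1|h1] := ltP K s; have [h2|h2] := ltP K t;
rewrite ?h1 ?h2 ?(ltNge K s) ?(ltNge K t) ?h1 ?h2 /=;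
rewrite ?(ltNge (- K) s) ?(ltNge (- K) t) ?(ltNge (- K) K);
have [h3|h3] := leP s (-K); have [h4|h4] := leP t (-K); have [h5|h5] := leP K (-K);
rewrite ?h3 ?h4 ?h5 ?(leNgt s (-K)) ?(leNgt t (-K)) ?(leNgt K (-K)) ?h3 ?h4 ?h5 /=;
rewrite ler_norml; apply/andP; split; lra.
Qed.




Lemma lipconst_spec d (h : d.-tuple R -> R) L0 : lipschitz_with L0 h ->
  [/\ 0 <= lipconst h, lipschitz_with (lipconst h) h &
      forall L', 0 <= L' -> lipschitz_with L' h -> lipconst h <= L'].
Proof.
move=> HL0; rewrite /lipconst.
set E := [set L | 0 <= L /\ lipschitz_with L h].
have hE : E (Num.max L0 0).
  split; first by rewrite le_max lexx orbT.
  move=> x y; apply: le_trans (HL0 x y) _; apply: ler_wpM2r; first exact: edist_ge0.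
  by rewrite le_max lexx.
have nE : E !=set0 by exists (Num.max L0 0).
have lb : lbound E 0 by move=> L [].
have hl : has_lbound E by exists 0.
split.
- exact: lb_le_inf nE lb.
- move=> x y; have := edist_ge0 x y; rewrite le_eqVlt => /orP[/eqP e0|epos].
    by have := hE.2 x y; rewrite -e0 !mulr0.
  rewrite -ler_pdivrMr //; apply: lb_le_inf nE _ => L [_ HL].
  by rewrite ler_pdivrMr //; exact: HL.
- by move=> L' L0' HL'; exact: ge_inf hl _ (conj L0' HL').
Qed.

Lemma lip_mono d (h : d.-tuple R -> R) L L' : L <= L' -> lipschitz_with L h -> lipschitz_with L' h.
Proof.
move=> LL H x y; apply: le_trans (H x y) _; apply: ler_wpM2r => //; exact: edist_ge0.
Qed.

Lemma Eemp_eq d M (xs : nat -> d.-tuple R) h h' :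
  (forall k, (k < M)%N -> h (xs k) = h' (xs k)) -> Eemp M xs h = Eemp M xs h'.
Proof. by move=> H; rewrite /Eemp; congr (_ * _); apply: eq_bigr => k _; exact: H. Qed.

Lemma EempZr d M (xs : nat -> d.-tuple R) h c :
  Eemp M xs (fun x => h x / c) = Eemp M xs h / c.
Proof. by rewrite /Eemp -mulr_suml mulrA. Qed.

Lemma Eemp_bound d M (xs : nat -> d.-tuple R) h K : (0 < M)%N ->
  (forall x, `|h x| <= K) -> `|Eemp M xs h| <= K.
Proof.
move=> M0 hK; rewrite /Eemp.
have H1 : `|\sum_(k < M) h (xs k)| <= K *+ M.
  apply: le_trans (ler_norm_sum _ _ _) _.
  have -> : K *+ M = \sum_(k < M) K by rewrite sumr_const card_ord.
  by apply: ler_sum => k _; exact: hK.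
have Mp : (0 : R) < M%:R by rewrite ltr0n.
rewrite normrM ger0_norm ?invr_ge0 ?ler0n //.
rewrite -ler_pdivlMl ?invr_gt0 // invrK; apply: (le_trans H1).
by rewrite mulr_natl.
Qed.

Lemma mpre_lt dT (T : measurableType dT) (phi : T -> R) r :
  measurable_fun setT phi -> measurable [set x | phi x < r].
Proof.
move=> mf; have := mf measurableT _ (measurable_itv `]-oo, r[); rewrite setTI.
suff -> : [set x | phi x < r] = phi @^-1` `]-oo, r[%classic by [].
by apply/seteqP; split => x /=; rewrite in_itv /=.
Qed.

Definition box d (c : d.-tuple R) (r : R) :=
  [set y : d.-tuple R | forall i, `|tnth y i - tnth c i| < r].
Arguments box {d}.

Lemma box_measurable d (c : d.-tuple R) (r : R) : measurable (box (d:=d) c r).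
Proof.
have -> : box c r = \bigcap_(i in [set: 'I_d]) [set y | `|tnth y i - tnth c i| < r].
  apply/seteqP; split => y /= H i; first by move=> _; exact: H.
  exact: (H i I).
apply: fin_bigcap_measurable; first exact: finite_finset.
move=> i _; apply: mpre_lt; apply: measurableT_comp; first exact: measurable_realfun.normr_measurable.
apply: measurable_realfun.measurable_funB; [exact: measurable_tnth | exact: measurable_cst].
Qed.

Lemma S_exists d (nu : probability (d.-tuple R) R) (P : (d.-tuple R -> R) -> Prop) (L K : R) :
  0 <= L -> (forall h, P h -> lipschitz_with L h) ->
  (forall h, P h -> \forall x \ae nu, `|h x| <= K) ->
  exists S, [/\ measurable S, nu (~` S) = 0%E & forall h x, P h -> S x -> `|h x| <= K].
Proof.
move=> L0 HL Hae.
pose F : nat -> set (d.-tuple R) := fun n =>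
  match @unpickle (d.-tuple rat * rat)%type n with
  | Some qr => if nu (box (map_tuple ratr qr.1) (ratr qr.2)) == 0%E
               then box (map_tuple ratr qr.1) (ratr qr.2) else set0
  | None => set0 end.
have Fneg : forall n, nu.-negligible (F n).
  move=> n; rewrite /F; case: unpickle => [[q r]|] /=; last exact: negligible_set0.
  case: eqP => h; last exact: negligible_set0.
  by apply/negligibleP => //; exact: box_measurable.
have [NA [mA nuA UA]] := @negligible_bigcup _ _ _ nu F Fneg.
exists (~` NA); split; [exact: measurableC | by rewrite setCK |].
move=> h x Ph SAx; rewrite leNgt; apply/negP => hK.
pose eta := `|h x| - K.
have eta0 : 0 < eta by rewrite subr_gt0.
pose c := 2 * d%:R * L.
have c0 : 0 <= c by rewrite mulr_ge0 // mulr_ge0 // ler0n.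
have [r hr] : exists r : rat, (0 < ratr r :> R) && (ratr r < eta / (c + 1)).
  have [q] := @rat_in_itvoo R 0 (eta / (c + 1)) (divr_gt0 eta0 (ltr_wpDl c0 ltr01)).
  by rewrite in_itv /= => hq; exists q.
move/andP: hr => [r0 r1].
have [qf hqf] : {qf : 'I_d -> rat & forall i, `|tnth x i - ratr (qf i)| < ratr r}.
  apply: (@choice _ _ (fun i (q0 : rat) => `|tnth x i - ratr q0| < ratr r :> R)) => i.
  have [q] := @rat_in_itvoo R (tnth x i - ratr r) (tnth x i + ratr r) ltac:(lra).
  rewrite in_itv /= => /andP[q1 q2]; exists q; rewrite ltr_norml; apply/andP; split; lra.
pose q := [tuple qf i | i < d].
have hbox : box (map_tuple ratr q) (ratr r) `<=` [set y | K < `|h y|].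
  move=> y hy /=.
  have hxy : forall i, `|tnth x i - tnth y i| <= ratr r * 2.
    move=> i; have := hqf i; have := hy i; rewrite tnth_map tnth_mktuple => h1 h2.
    rewrite (_ : tnth x i - tnth y i = (tnth x i - ratr (qf i)) - (tnth y i - ratr (qf i))); last by ring.
    apply: le_trans (ler_normB _ _) _; lra.
  have he := @edist_le d x y (ratr r * 2) ltac:(lra) hxy.
  have hl := HL h Ph x y.
  have hd := lerB_dist (h x) (h y).
  have hLe : L * Defs.edist x y <= L * (ratr r * 2 * d%:R) by apply: ler_wpM2l.
  have hrc : ratr r * c <= ratr r * (c + 1) by apply: ler_wpM2l; lra.
  have hrc2 : ratr r * (c + 1) < eta by rewrite -ltr_pdivlMr // ltr_wpDl // ltr01.
  have hrc3 : L * (ratr r * 2 * d%:R) = ratr r * c by rewrite /c; ring.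
  rewrite /eta in hrc2; lra.
have hnull : nu (box (map_tuple ratr q) (ratr r)) = 0%E.
  have [N [mN N0 HN]] := Hae h Ph.
  apply/eqP; rewrite eq_le measure_ge0 andbT -N0; apply: le_measure; rewrite ?inE //.
    exact: box_measurable.
  by move=> y /hbox /= hy; apply: HN => /= hy'; lra.
apply: SAx; apply: UA; exists (pickle (q, r)) => //.
rewrite /F pickleK /= hnull eqxx => i.
by rewrite tnth_map tnth_mktuple.
Qed.

Section Integrals.
Variable d : nat.
Variable nu : probability (d.-tuple R) R.

Lemma int_bounded (u : d.-tuple R -> R) K : measurable_fun setT u ->
  (forall x, `|u x| <= K) -> nu.-integrable setT (EFin \o u).
Proof.
move=> mu hK; apply: measurable_bounded_integrable => //.
  by apply: le_lt_trans (probability_le1 _ measurableT) _; rewrite ltry.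
idtac.
exists K; split; first exact: num_real.
move=> M hM x _ /=; apply: le_trans (hK x) _; exact: ltW.
Qed.

Lemma Enu_cst c : Enu nu (fun _ => c) = c.
Proof.
change (Rintegral nu setT (fun _ => c) = c).
rewrite Rintegral_cst // -[RHS]mulr1; congr (_ * _); exact: (congr1 fine (probability_setT nu)).
Qed.

Lemma Enu_ae (u G : d.-tuple R -> R) (S : set (d.-tuple R)) : measurable S -> nu (~` S) = 0%E ->
  measurable_fun setT u -> measurable_fun setT G -> (forall x, S x -> u x = G x) ->
  Enu nu u = Enu nu G.
Proof.
move=> mS nS mu mG H; rewrite /Enu; congr fine; apply: ae_eq_integral => //.
- exact/measurable_realfun.measurable_EFinP.
- exact/measurable_realfun.measurable_EFinP.
exists (~` S); split => //; first exact: measurableC.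
by move=> x /= hx Sx; apply: hx => _; rewrite H.
Qed.

Lemma EnuZr (h : d.-tuple R -> R) c : nu.-integrable setT (EFin \o h) ->
  Enu nu (fun x => h x / c) = Enu nu h / c.
Proof.
move=> ih; change (Rintegral nu setT (fun x => h x * c^-1) = Rintegral nu setT h * c^-1).
exact: RintegralZr.
Qed.

Lemma Enu_le (h1 h2 : d.-tuple R -> R) : nu.-integrable setT (EFin \o h1) ->
  nu.-integrable setT (EFin \o h2) -> (forall x, h1 x <= h2 x) -> Enu nu h1 <= Enu nu h2.
Proof.
move=> i1 i2 H; change (Rintegral nu setT h1 <= Rintegral nu setT h2).
by apply: le_Rintegral => // x _; exact: H.
Qed.

Lemma L2_integrable (f : d.-tuple R -> R) : in_L2 nu f -> nu.-integrable setT (EFin \o f).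
Proof.
move=> [mf i2]; apply: (@le_integrable _ _ _ nu setT measurableT _ (EFin \o (fun x => 1 + f x ^+ 2))).
- exact/measurable_realfun.measurable_EFinP.
- move=> x _ /=; rewrite lee_fin.
  have h0 : 0 <= 1 + f x ^+ 2 by rewrite addr_ge0 // sqr_ge0.
  rewrite (ger0_norm h0).
  have := sqr_ge0 (`|f x| - 1); rewrite -[f x ^+ 2]real_normK ?num_real //.
  have := normr_ge0 (f x); nra.
- have -> : EFin \o (fun x => 1 + f x ^+ 2) = (EFin \o (fun _ => 1)) \+ (fun x => (f x ^+ 2)%:E).
    by apply/funext => x /=; rewrite EFinD.
  apply: integrableD => //.
  apply: (@int_bounded (fun _ => 1) 1); [exact: measurable_cst | by move=> _; rewrite normr1].
Qed.

Lemma Enu_centred (f : d.-tuple R -> R) : nu.-integrable setT (EFin \o f) ->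
  Enu nu (fun x => f x - Enu nu f) = 0.
Proof.
move=> i; change (Rintegral nu setT (fun x => f x - Enu nu f) = 0).
rewrite RintegralB //; last first.
  apply: (@int_bounded (fun _ => Enu nu f) `|Enu nu f|) => //; exact: measurable_cst.
have := Enu_cst (Enu nu f); rewrite /Enu /Rintegral => ->; exact: subrr.
Qed.


Lemma Enu_quad (v : d.-tuple R -> R) (a : R) : nu.-integrable setT (EFin \o v) ->
  nu.-integrable setT (EFin \o (fun x => v x ^+ 2)) ->
  Enu nu (fun x => (v x - a) ^+ 2) = Enu nu (fun x => v x ^+ 2) - 2 * a * Enu nu v + a ^+ 2.
Proof.
move=> i1 i2.
have -> : (fun x => (v x - a) ^+ 2) = (fun x => v x ^+ 2 + ((- (2 * a)) * v x + a ^+ 2)).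
  by apply/funext => x; ring.
have ic : nu.-integrable setT (EFin \o (fun _ : d.-tuple R => a ^+ 2)).
  apply: (@int_bounded _ `|a ^+ 2|); [exact: measurable_cst | by []].
have iz : nu.-integrable setT (EFin \o (fun x => (- (2 * a)) * v x)).
  have -> : EFin \o (fun x => (- (2 * a)) * v x) = (fun x => ((- (2 * a))%:E * (EFin \o v) x)%E).
    by apply/funext => x /=; rewrite EFinM.
  exact: integrableZl.
have iw : nu.-integrable setT (EFin \o (fun x => (- (2 * a)) * v x + a ^+ 2)).
  have -> : EFin \o (fun x => (- (2 * a)) * v x + a ^+ 2) =
    (EFin \o (fun x => (- (2 * a)) * v x)) \+ (EFin \o (fun _ => a ^+ 2)).
    by apply/funext => x /=; rewrite EFinD.
  exact: integrableD.
change (Rintegral nu setT (fun x => v x ^+ 2 + ((- (2 * a)) * v x + a ^+ 2)) =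
  Rintegral nu setT (fun x => v x ^+ 2) - 2 * a * Rintegral nu setT v + a ^+ 2).
rewrite RintegralD // RintegralD // RintegralZl //.
have := Enu_cst (a ^+ 2); rewrite /Enu /Rintegral => ->.
rewrite /Rintegral; ring.
Qed.
End Integrals.

Lemma clamp_meas dT (T : measurableType dT) (G : T -> R) K :
  measurable_fun setT G -> measurable_fun setT (fun x => clamp K (G x)).
Proof.
move=> mG.
have -> : (fun x => clamp K (G x)) = (fun _ => - K) \max ((fun _ => K) \min G).
  by apply/funext => x.
apply: measurable_realfun.measurable_maxr; first exact: measurable_cst.
apply: measurable_realfun.measurable_minr => //; exact: measurable_cst.
Qed.

Lemma lip_div d (psi : d.-tuple R -> R) c : 0 < c -> lipschitz_with c psi ->
  lipschitz_with 1 (fun x => psi x / c).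
Proof.
move=> c0 H x y; rewrite -mulrBl normrM (gtr0_norm (_ : 0 < c^-1)) ?invr_gt0 // mul1r.
by rewrite ler_pdivrMr // mulrC; exact: H.
Qed.

Lemma phi_pos d (alpha kappa : R) : 0 < kappa -> 0 < phiFG d alpha kappa.
Proof.
move=> k0; rewrite /phiFG; case: ifP => _; last exact: powR_gt0.
case: eqP => _; first exact: exprn_gt0.
case: eqP => _; last exact: exprn_gt0.
apply: exprn_gt0; apply: divr_gt0 => //; apply: ln_gt0.
have : 0 < kappa^-1 by rewrite invr_gt0.
lra.
Qed.
End Helpers.

Unset Implicit Arguments.
Set Strict Implicit.

Theorem lemma3 (R : realType) (d p : nat)
  (dO : measure_display) (Omega : measurableType dO) (Pr : probability Omega R)
  (nu : probability (d.-tuple R) R) (alpha beta : R)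
  (Pset : set (p.-tuple R)) (f : p.-tuple R -> d.-tuple R -> R)
  (X : nat -> Omega -> d.-tuple R) (M1 : nat) (mubar1 : Omega -> p.-tuple R)
  (c C gamma delta1 : R) :
  (0 < d)%N ->
  (* Assumption (A) *)
  1 < alpha -> 0 < beta ->
  (\int[nu]_x (expR (beta * powR (enorm x) alpha))%:E < +oo)%E ->
  (* f_mu continuous and in L^2_nu *)
  (forall mu, Pset mu -> econtinuous (f mu) /\ in_L2 nu (f mu)) ->
  let g := centred nu f in
  (* Assumption (B) *)
  L2_compact nu Pset g ->
  (exists K2 : R, forall mu, Pset mu -> l2norm nu (g mu) <= K2) ->
  (exists L : R, forall mu, Pset mu -> lipschitz_with L (g mu)) ->
  (ereal_sup [set linf nu (g mu) | mu in Pset] < +oo)%E ->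
  (forall n : nat, 0 < kolmogorov_width nu Pset g n) ->
  let K_L := sup [set lipconst (g mu) | mu in Pset] in
  let K_inf := fine (ereal_sup [set linf nu (g mu) | mu in Pset]) in
  let sigma0hat2 := sup [set Varnu nu (g mu) | mu in Pset] in
  (* the samples Zbar^1 = (X 0, ..., X (M1-1)) are i.i.d. with law nu *)
  iid_law Pr nu X ->
  (* the Fournier--Guillin constants c, C *)
  0 < c -> 0 < C ->
  (forall (M : nat) (kappa : R), (0 < M)%N -> 0 < kappa ->
     exists B : set Omega,
       [/\ measurable B,
           [set w | (kappa%:E <= ereal_sup
               [set (`|Enu nu h - Eemp M (fun k => X k w) h|)%:E
                 | h in [set h | lipschitz_with 1 h]])%E] `<=` B &
           (Pr B <= (C * expR (- (c * M%:R * phiFG d alpha kappa)))%:E)%E]) ->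
  (* first step of the MC-greedy algorithm *)
  (forall w, [/\ Pset (mubar1 w),
     (forall mu, Pset mu ->
        Varemp M1 (fun k => X k w) (g mu) <= Varemp M1 (fun k => X k w) (g (mubar1 w))) &
     l2norm nu (g (mubar1 w)) != 0]) ->
  0 < gamma < 1 -> 0 < delta1 < 1 ->
  let kappa0 := (1 - gamma ^+ 2) * sigma0hat2 / (8 * K_inf * K_L) in
  - ln (delta1 / C) / (c * phiFG d alpha kappa0) <= M1%:R ->
  exists A : set Omega,
    [/\ measurable A,
        A `<=` [set w | gamma ^+ 2 * sigma0hat2 <= Varnu nu (g (mubar1 w))] &
        ((1 - delta1)%:E <= Pr A)%E].
Proof.
move=> d0 a1 b0 hint hf g hcomp hK2 [L0 hL0] hsupinf hwidth K_L K_inf s2 hiid c0 C0 hFG hmu.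
move=> /andP[g0 g1] /andP[dl0 dl1] kappa0 hM1.
have [w0 _] : exists w : Omega, True.
  apply: contrapT => hn.
  have h : [set: Omega] = set0 by apply/seteqP; split => w // _; apply: hn; exists w.
  have := probability_setT Pr; rewrite h measure0 => h01.
  by move: h01 => /eqP; rewrite eqe eq_sym oner_eq0.
pose mu0 := mubar1 w0.
have [P0 _ nz0] := hmu w0.
have hGm : forall mu, Pset mu -> measurable_fun setT (g mu).
  move=> mu Pmu; have [_ [mf _]] := hf mu Pmu.
  apply: measurable_realfun.measurable_funB => //; exact: measurable_cst.
have hGE : forall mu, Pset mu -> Enu nu (g mu) = 0.
  move=> mu Pmu; have [_ hl2] := hf mu Pmu.
  rewrite /g /centred; exact: (Enu_centred (L2_integrable hl2)).
have hVar : forall mu, Pset mu -> Varnu nu (g mu) = Enu nu (fun x => g mu x ^+ 2).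
  by move=> mu Pmu; rewrite /Varnu hGE // expr2 mulr0 subr0.
have hLmax : forall mu, Pset mu -> lipconst (g mu) <= Num.max L0 0.
  move=> mu Pmu; have [_ _ lmin] := lipconst_spec (hL0 mu Pmu).
  apply: lmin; first by rewrite le_max lexx orbT.
  by apply: lip_mono (hL0 mu Pmu); rewrite le_max lexx.
have hubL : has_ubound [set lipconst (g mu) | mu in Pset].
  by exists (Num.max L0 0) => _ [mu Pmu <-]; exact: hLmax.
have hlip : forall mu, Pset mu -> lipschitz_with K_L (g mu).
  move=> mu Pmu; have [_ llip _] := lipconst_spec (hL0 mu Pmu).
  apply: lip_mono llip; apply: ub_le_sup hubL _ _; by exists mu.
have KL0 : 0 <= K_L.
  have [l0 _ _] := lipconst_spec (hL0 mu0 P0).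
  apply: le_trans l0 _; apply: ub_le_sup hubL _ _; by exists mu0.
pose ES := [set linf nu (g mu) | mu in Pset].
have hl0 : forall mu, (0 <= linf nu (g mu))%E.
  move=> mu; rewrite /linf.
  apply: (@ess_sup_ger _ _ _ nu (fun x => `|g mu x|) 0) => //.
    have h1 := probability_setT nu. first [by rewrite h1 lte01 | by rewrite [X in (_ < X)%E]h1 lte01 | by apply: (lt_le_trans lte01); rewrite -h1 | idtac "fail"].
have hES0 : (0 <= ereal_sup ES)%E.
  apply: le_trans (hl0 mu0) _; apply: ereal_sup_ubound; by exists mu0.
have hKE : K_inf%:E = ereal_sup ES.
  rewrite /K_inf fineK // ge0_fin_numE //.
have K0 : 0 <= K_inf by rewrite -lee_fin hKE.
have hae : forall mu, Pset mu -> \forall x \ae nu, `|g mu x| <= K_inf.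
  move=> mu Pmu.
  have hle : (linf nu (g mu) <= K_inf%:E)%E.
    by rewrite hKE; apply: ereal_sup_ubound; exists mu.
  move/ess_supP: hle; apply: filterS => x; by rewrite lee_fin.
have [S [mS nS hS]] := @S_exists R d nu (fun h => exists2 mu, Pset mu & h = g mu) K_L K_inf KL0
   ltac:(by move=> h [mu Pmu ->]; exact: hlip)
   ltac:(by move=> h [mu Pmu ->]; exact: hae).
have hSb : forall mu x, Pset mu -> S x -> `|g mu x| <= K_inf.
  by move=> mu x Pmu Sx; apply: hS Sx; exists mu.
pose u mu := fun x => clamp K_inf (g mu x).
have hub : forall mu x, `|u mu x| <= K_inf by move=> mu x; exact: clamp_bound.
have hum : forall mu, Pset mu -> measurable_fun setT (u mu).
  by move=> mu Pmu; apply: clamp_meas; exact: hGm.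
have hulip : forall mu, Pset mu -> lipschitz_with K_L (u mu).
  move=> mu Pmu x y; apply: le_trans (clamp_lip _ _ K0) _; exact: hlip.
have huS : forall mu x, Pset mu -> S x -> u mu x = g mu x.
  by move=> mu x Pmu Sx; apply: clamp_id; exact: hSb.
have hu2b : forall mu x, `|u mu x ^+ 2| <= K_inf ^+ 2.
  move=> mu x; rewrite normrX; apply: lerXn2r; rewrite ?nnegrE //; exact: hub.
have hu2m : forall mu, Pset mu -> measurable_fun setT (fun x => u mu x ^+ 2).
  move=> mu Pmu; apply: (@measurableT_comp _ _ _ _ _ _ (fun t : R => t ^+ 2)).
    exact: measurable_realfun.exprn_measurable.
  exact: hum.
have hui : forall mu, Pset mu -> nu.-integrable setT (EFin \o u mu).
  by move=> mu Pmu; apply: (@int_bounded _ _ _ _ K_inf) => //; exact: hum.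
have hu2i : forall mu, Pset mu -> nu.-integrable setT (EFin \o (fun x => u mu x ^+ 2)).
  by move=> mu Pmu; apply: (@int_bounded _ _ _ _ (K_inf ^+ 2)) => //; exact: hu2m.
have hEu : forall mu, Pset mu -> Enu nu (u mu) = 0.
  move=> mu Pmu; rewrite -(hGE mu Pmu); apply: (Enu_ae mS nS (hum mu Pmu) (hGm mu Pmu)).
  by move=> x Sx; exact: huS.
have hEu2 : forall mu, Pset mu -> Enu nu (fun x => u mu x ^+ 2) = Varnu nu (g mu).
  move=> mu Pmu; rewrite hVar //; apply: (Enu_ae mS nS (hu2m mu Pmu)).
    apply: (@measurableT_comp _ _ _ _ _ _ (fun t : R => t ^+ 2)).
      exact: measurable_realfun.exprn_measurable.
    exact: hGm.
  by move=> x Sx; rewrite huS.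
have hVK : forall mu, Pset mu -> Varnu nu (g mu) <= K_inf ^+ 2.
  move=> mu Pmu; rewrite -hEu2 // -[X in _ <= X](Enu_cst nu).
  apply: Enu_le => //; first exact: hu2i.
    apply: (@int_bounded _ _ _ _ (K_inf ^+ 2)); first exact: measurable_cst.
    by move=> _; rewrite ger0_norm // sqr_ge0.
  by move=> x; apply: le_trans (hu2b mu x); exact: ler_norm.
have hV0 : 0 < Varnu nu (g mu0).
  by move: nz0; rewrite /l2norm sqrtr_eq0 -ltNge.
have hK0 : 0 < K_inf.
  rewrite lt_neqAle K0 andbT; apply/eqP => hk.
  have := hVK mu0 P0; rewrite -hk expr2 mulr0; lra.
have hKL0 : 0 < K_L.
  rewrite lt_neqAle KL0 andbT; apply/eqP => hk.
  pose x0 := [tuple (0 : R) | i < d].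
  have hc : g mu0 = fun _ => g mu0 x0.
    apply/funext => x; apply/eqP; rewrite -subr_eq0 -normr_le0.
    by have := hlip mu0 P0 x x0; rewrite -hk mul0r.
  by move: hV0; rewrite /Varnu hc !Enu_cst subrr ltxx.
have hubV : has_ubound [set Varnu nu (g mu) | mu in Pset].
  by exists (K_inf ^+ 2) => _ [mu Pmu <-]; exact: hVK.
have hVs : forall mu, Pset mu -> Varnu nu (g mu) <= s2.
  by move=> mu Pmu; apply: ub_le_sup hubV _ _; exists mu.
have hs0 : 0 < s2 by apply: lt_le_trans hV0 (hVs _ P0).
have hg2 : gamma ^+ 2 < 1 by rewrite expr2; nra.
have hk0 : 0 < kappa0.
  rewrite /kappa0; apply: divr_gt0; first by apply: mulr_gt0 => //; lra.
  by rewrite mulr_gt0 // mulr_gt0 // ltr0n.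
(* the constant C is at least 1 *)
have hphi0 : 0 < phiFG d alpha kappa0 by exact: phi_pos.
pose u0 := u mu0.
pose kap1 := Varnu nu (g mu0) / (4 * K_inf * K_L).
have h4KL : 0 < 4 * K_inf * K_L by rewrite mulr_gt0 // mulr_gt0 // ltr0n.
have hkap1 : 0 < kap1 by rewrite /kap1 divr_gt0.
have [B1 [mB1 sub1 PrB1]] := hFG 1%N kap1 isT hkap1.
have hall : forall w, B1 w.
  move=> w; apply: sub1 => /=.
  pose a := u0 (X 0%N w).
  pose h := fun y => (u0 y - a) ^+ 2 / (4 * K_inf * K_L).
  have hlh : lipschitz_with 1 h.
    apply: lip_div => // x y.
    rewrite (_ : (u0 x - a) ^+ 2 - (u0 y - a) ^+ 2 = (u0 x - u0 y) * (u0 x + u0 y - 2 * a)); last by ring.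
    rewrite normrM.
    have h4 : `|u0 x + u0 y - 2 * a| <= 4 * K_inf.
      have := hub mu0 x; have := hub mu0 y; have := hub mu0 (X 0%N w).
      rewrite /a /u0 !ler_norml => /andP[? ?] /andP[? ?] /andP[? ?].
      apply/andP; split; lra.
    have h1 := hulip mu0 P0 x y.
    apply: le_trans (ler_pM (normr_ge0 _) (normr_ge0 _) h1 h4) _.
    by rewrite le_eqVlt; apply/orP; left; apply/eqP; ring.
  have hel : [set (`|Enu nu h0 - Eemp 1 (fun k => X k w) h0|)%:E | h0 in [set h0 | lipschitz_with 1 h0]]
     (`|Enu nu h - Eemp 1 (fun k => X k w) h|)%:E by exists h.
  apply: le_trans (ereal_sup_ubound hel); rewrite lee_fin.
  have -> : Eemp 1 (fun k => X k w) h = 0.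
    by rewrite /Eemp big_ord1 /h /a subrr expr2 !mul0r mulr0.
  have hint2 : nu.-integrable setT (EFin \o (fun y => (u0 y - a) ^+ 2)).
    apply: (@int_bounded _ _ _ _ (4 * K_inf ^+ 2)).
      apply: (@measurableT_comp _ _ _ _ _ _ (fun t : R => (t - a) ^+ 2)).
        apply: (@measurableT_comp _ _ _ _ _ _ (fun t : R => t ^+ 2)).
          exact: measurable_realfun.exprn_measurable.
        apply: measurable_realfun.measurable_funB => //; exact: measurable_cst.
      exact: hum.
    move=> y; rewrite normrX.
    have := hub mu0 y; have := hub mu0 (X 0%N w).
    rewrite /a /u0 => ha hy.
    have : `|u mu0 y - u mu0 (X 0%N w)| <= 2 * K_inf.
      apply: le_trans (ler_normB _ _) _; lra.
    move=> hh; rewrite (_ : 4 * K_inf ^+ 2 = (2 * K_inf) ^+ 2); last by ring.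
    by rewrite lerXn2r ?nnegrE // mulr_ge0.
  rewrite /h EnuZr // Enu_quad //; [|exact: hui|exact: hu2i].
  rewrite /u0 hEu2 // hEu // subr0 mulr0 subr0 /kap1.
  rewrite ger0_norm; last by apply: divr_ge0; [apply: addr_ge0; [exact: ltW | exact: sqr_ge0] | exact: ltW].
  rewrite ler_pM2r ?invr_gt0 // lerDl; exact: sqr_ge0.
have hC1 : 1 <= C.
  have hB1 : B1 = setT by apply/seteqP; split => w // _; exact: hall.
  move: PrB1; rewrite hB1 probability_setT lee_fin => hh.
  have : expR (- (c * 1%:R * phiFG d alpha kap1)) <= 1.
    rewrite expR_le1 oppr_le0 mulr_ge0 // ?ltW // ?phi_pos //.
    by rewrite mulr1.
  move=> He; have h2 := ler_wpM2l (ltW C0) He; move: h2 hh; rewrite !mulr1; lra.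
have hcphi : 0 < c * phiFG d alpha kappa0 by rewrite mulr_gt0.
have hdC : 0 < delta1 / C by rewrite divr_gt0.
have hdC1 : delta1 / C < 1 by rewrite ltr_pdivrMr // mul1r; lra.
have hM1pos : (0 < M1)%N.
  rewrite lt0n; apply/eqP => hM0; move: hM1; rewrite hM0 ler_pdivrMr // mul0r oppr_le0.
  have := ln_lt0 (ltac:(by rewrite hdC hdC1) : 0 < delta1 / C < 1); lra.
have hexp : C * expR (- (c * M1%:R * phiFG d alpha kappa0)) <= delta1.
  move: hM1; rewrite ler_pdivrMr // => hM1.
  have : expR (- (c * M1%:R * phiFG d alpha kappa0)) <= delta1 / C.
    rewrite -[X in _ <= X]lnK ?posrE // ler_expR.
    rewrite (_ : c * M1%:R * phiFG d alpha kappa0 = M1%:R * (c * phiFG d alpha kappa0)); last by ring.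
    lra.
  move=> h; apply: le_trans (ler_wpM2l (ltW C0) h) _; rewrite mulrCA mulfV ?mulr1 // (gt_eqF C0) //.
have [B [mB subB PrB]] := hFG M1 kappa0 hM1pos hk0.
have [mX hXlaw _] := hiid.
have hXS : forall k, measurable (X k @^-1` (~` S)).
  move=> k; have := mX k measurableT (~` S) (measurableC mS); by rewrite setTI.
have hXneg : forall k, Pr.-negligible (X k @^-1` (~` S)).
  move=> k; apply/negligibleP => //; exact: eq_trans (hXlaw k _ (measurableC mS)) nS.
have [NA [mNA PrNA UNA]] := @negligible_bigcup _ _ _ Pr _ hXneg.
exists (~` (B `|` NA)); split.
- by apply: measurableC; apply: measurableU.
- move=> w /= hw.
  have nB : ~ B w by move=> Bw; apply: hw; left.
  have hSw : forall k, S (X k w).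
    move=> k; apply: contrapT => nS'; apply: hw; right; apply: UNA; by exists k.
  pose xs := fun k => X k w.
  have hdev : forall h, lipschitz_with 1 h -> `|Enu nu h - Eemp M1 xs h| < kappa0.
    move=> h hh; rewrite -lte_fin.
    have hlt : (ereal_sup [set (`|Enu nu h0 - Eemp M1 (fun k => X k w) h0|)%:E
                 | h0 in [set h0 | lipschitz_with 1 h0]] < kappa0%:E)%E.
      by rewrite ltNge; apply/negP => hle; apply: nB; apply: subB.
    apply: le_lt_trans hlt; apply: ereal_sup_ubound; by exists h.
  have hKK : K_inf * K_L * kappa0 = (1 - gamma ^+ 2) * s2 / 8.
    rewrite /kappa0; field.
    by rewrite (gt_eqF hKL0) (gt_eqF hK0).
  have hbnd : forall mu, Pset mu ->
      Varnu nu (g mu) - 3 * (K_inf * K_L * kappa0) <= Varemp M1 xs (g mu) /\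
      Varemp M1 xs (g mu) <= Varnu nu (g mu) + 2 * (K_inf * K_L * kappa0).
    move=> mu Pmu.
    have e1 : Eemp M1 xs (g mu) = Eemp M1 xs (u mu).
      by apply: Eemp_eq => k _; rewrite huS //; exact: hSw.
    have e2 : Eemp M1 xs (fun x => g mu x ^+ 2) = Eemp M1 xs (fun x => u mu x ^+ 2).
      by apply: Eemp_eq => k _; rewrite huS //; exact: hSw.
    have hVe : Varemp M1 xs (g mu) = Eemp M1 xs (fun x => u mu x ^+ 2) - Eemp M1 xs (u mu) ^+ 2.
      by rewrite /Varemp e1 e2.
    have ha : `|Eemp M1 xs (u mu)| < K_L * kappa0.
      have := hdev _ (lip_div hKL0 (hulip mu Pmu)).
      rewrite EnuZr ?hui // hEu // mul0r EempZr sub0r normrN normrM.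
      rewrite (gtr0_norm (_ : 0 < K_L^-1)) ?invr_gt0 //.
      by rewrite -ltr_pdivlMr ?invr_gt0 // invrK mulrC.
    have hb : `|Eemp M1 xs (u mu)| <= K_inf by apply: Eemp_bound.
    have h2KL : 0 < 2 * K_inf * K_L by rewrite mulr_gt0 // mulr_gt0 // ltr0n.
    have hlip2 : lipschitz_with (2 * K_inf * K_L) (fun x => u mu x ^+ 2).
      move=> x y; rewrite subr_sqr normrM.
      have h4 : `|u mu x + u mu y| <= 2 * K_inf.
        apply: le_trans (ler_normD _ _) _; have := hub mu x; have := hub mu y; lra.
      apply: le_trans (ler_pM (normr_ge0 _) (normr_ge0 _) (hulip mu Pmu x y) h4) _.
      by rewrite le_eqVlt; apply/orP; left; apply/eqP; ring.
    have hc : `|Varnu nu (g mu) - Eemp M1 xs (fun x => u mu x ^+ 2)| < 2 * K_inf * K_L * kappa0.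
      have := hdev _ (lip_div h2KL hlip2).
      rewrite EnuZr ?hu2i // hEu2 // EempZr -mulrBl normrM.
      rewrite (gtr0_norm (_ : 0 < (2 * K_inf * K_L)^-1)) ?invr_gt0 //.
      rewrite -ltr_pdivlMr ?invr_gt0 // invrK mulrC.
      by [].
    have hsq : Eemp M1 xs (u mu) ^+ 2 <= K_inf * (K_L * kappa0).
      rewrite -[_ ^+ 2]real_normK ?num_real // expr2.
      apply: ler_pM => //; exact: ltW.
    move: hc; rewrite ltr_norml hVe => /andP[hc1 hc2].
    have := sqr_ge0 (Eemp M1 xs (u mu)).
    split; lra.
  have [Pw hmax _] := hmu w.
  have hmu_all : forall mu, Pset mu ->
      Varnu nu (g mu) <= Varnu nu (g (mubar1 w)) + 5 * (K_inf * K_L * kappa0).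
    move=> mu Pmu; have [h1 _] := hbnd mu Pmu; have [_ h2] := hbnd _ Pw.
    have := hmax mu Pmu; rewrite /xs in h1 h2 |- *; lra.
  have hs2le : s2 <= Varnu nu (g (mubar1 w)) + 5 * (K_inf * K_L * kappa0).
    apply: ge_sup; first by exists (Varnu nu (g mu0)), mu0.
    by move=> _ [mu Pmu <-]; exact: hmu_all.
  rewrite hKK in hs2le.
  have : 0 <= 1 - gamma ^+ 2 by lra.
  nra.
- rewrite probability_setC; last by apply: measurableU.
  have e : Pr (B `|` NA) = Pr B := measureU0 mB mNA PrNA.
  have hU : (Pr (B `|` NA) <= delta1%:E)%E.
    rewrite e; apply: le_trans PrB _; rewrite lee_fin; exact: hexp.
  have hfin : Pr (B `|` NA) = (fine (Pr (B `|` NA)))%:E.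
    rewrite fineK // ge0_fin_numE //; apply: le_lt_trans hU _; exact: ltry.
  rewrite hfin -EFinB lee_fin; move: hU; rewrite hfin lee_fin; lra.
Qed.
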